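(* Let $m>0$ and $\bar b>0$. For real $\lambda$ and a real symmetric matrix $\widehat{\bar P}=\begin{pmatrix}\bar p_{11}&\bar p_{12}\\ \bar p_{12}&\bar p_{22}\end{pmatrix}$ define the symmetric $3\times3$ matrix $\widehat{\bar T}(\lambda,\widehat{\bar P})$ with entries $$\bar t_{11}=(\lambda-2\bar b\sqrt m)\bar p_{11}+2\sqrt m\,\bar p_{12},\quad \bar t_{12}=-\bar b\sqrt m\,\bar p_{12}+\sqrt m\,\bar p_{22}+\lambda\bar p_{12},\quad \bar t_{13}=-\bar p_{11}/\sqrt m+\sqrt m/2,$$ $$\bar t_{22}=\lambda\bar p_{22}-\tfrac m2\lambda,\quad \bar t_{23}=-\bar p_{12}/\sqrt m+\lambda/2,\quad \bar t_{33}=0.$$ Let $\bar r^\star$ be the unique real number with $\bar r^\star\bar b^2-2(\bar r^{\star2}+1)\bar b+\bar r^{\star3}+3\bar r^\star=0$, and $\lambda^\star=\sqrt m\,\bar r^\star$. Then $\lambda^\star$ equals the maximum of $\lambda$ over all pairs $(\lambda,\widehat{\bar P})$ satisfying $\widehat{\bar T}(\lambda,\widehat{\bar P})\preceq0$ and $\widehat{\bar P}\succeq0$; it is attained at $\widehat{\bar P}=\frac m2\begin{pmatrix}1&\bar r^\star\\ \bar r^\star&\bar r^{\star2}\end{pmatrix}$.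
   Context: The matrix $\widehat{\bar T}$ is the Lyapunov linear matrix inequality matrix (with no smoothness multiplier) for the first-order system $\dot v=-\bar b\sqrt m v-\nabla f(x)/\sqrt m$, $\dot x=\sqrt m v$, equivalent to $\ddot x+\bar b\sqrt m\dot x+\nabla f(x)=0$. $\preceq0$/$\succeq0$ denote negative/positive semidefiniteness. *)

(* Defs.v *)
From mathcomp Require Import all_boot all_order all_algebra.
From mathcomp Require Import reals.
Set Implicit Arguments. Unset Strict Implicit. Unset Printing Implicit Defensive.
Import Order.TTheory GRing.Theory Num.Theory.
Local Open Scope ring_scope.

Definition psdmx (R : realType) (n : nat) (A : 'M[R]_n) : Prop :=
  A^T = A /\ forall x : 'cV[R]_n, 0 <= (x^T *m A *m x) ord0 ord0.

Definition nsdmx (R : realType) (n : nat) (A : 'M[R]_n) : Prop := psdmx (- A).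

Definition sym2 (R : realType) (a b c : R) : 'M[R]_2 :=
  \matrix_(i < 2, j < 2)
    match nat_of_ord i, nat_of_ord j with
    | 0, 0 => a
    | 1, 1 => c
    | _, _ => b
    end.

Definition Tbar (R : realType) (m bb l : R) (P : 'M[R]_2) : 'M[R]_3 :=
  let sm := Num.sqrt m in
  let p11 := P ord0 ord0 in
  let p12 := P ord0 ord_max in
  let p22 := P ord_max ord_max in
  let t11 := (l - 2 * bb * sm) * p11 + 2 * sm * p12 in
  let t12 := - bb * sm * p12 + sm * p22 + l * p12 in
  let t13 := - p11 / sm + sm / 2 in
  let t22 := l * p22 - m / 2 * l in
  let t23 := - p12 / sm + l / 2 in
  let t33 := 0 in
  \matrix_(i < 3, j < 3)
    match nat_of_ord i, nat_of_ord j with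
    | 0, 0 => t11
    | 0, 1 | 1, 0 => t12
    | 0, _ | _, 0 => t13
    | 1, 1 => t22
    | 1, _ | _, 1 => t23
    | _, _ => t33
    end.

Definition rcubic (R : realType) (bb r : R) : R :=
  r * bb ^+ 2 - 2 * (r ^+ 2 + 1) * bb + r ^+ 3 + 3 * r.

Definition feasible (R : realType) (m bb l : R) (P : 'M[R]_2) : Prop :=
  nsdmx (Tbar m bb l P) /\ psdmx P.

(* Main.v *)
Require Import Defs.
From mathcomp Require Import all_boot all_order all_algebra.
From mathcomp Require Import reals ring lra.
Import Order.TTheory GRing.Theory Num.Theory.
Set Implicit Arguments. Unset Strict Implicit.
Local Open Scope ring_scope.
Definition vec3 (R : realType) (a b c : R) : 'cV[R]_3 :=
  \col_(i < 3) match nat_of_ord i with 0 => a | 1 => b | _ => c end.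
Definition vec2 (R : realType) (a b : R) : 'cV[R]_2 :=
  \col_(i < 2) match nat_of_ord i with 0 => a | _ => b end.

Lemma qfT (R : realType) (m bb l : R) (P : 'M[R]_2) a b c :
  let sm := Num.sqrt m in
  let p11 := P ord0 ord0 in
  let p12 := P ord0 ord_max in
  let p22 := P ord_max ord_max in
  ((vec3 a b c)^T *m (- Tbar m bb l P) *m vec3 a b c) ord0 ord0 =
  - (a * a * ((l - 2 * bb * sm) * p11 + 2 * sm * p12)
     + 2 * a * b * (- bb * sm * p12 + sm * p22 + l * p12)
     + 2 * a * c * (- p11 / sm + sm / 2)
     + b * b * (l * p22 - m / 2 * l)
     + 2 * b * c * (- p12 / sm + l / 2)).
Proof.
rewrite /= !mxE !big_ord_recr !big_ord0 /= !mxE !big_ord_recr !big_ord0 /= !mxE /=.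
ring.
Qed.

Lemma qfP (R : realType) (P : 'M[R]_2) a b :
  ((vec2 a b)^T *m P *m vec2 a b) ord0 ord0 =
  a * a * P ord0 ord0 + a * b * (P ord0 ord_max + P ord_max ord0) + b * b * P ord_max ord_max.
Proof.
rewrite /= !mxE !big_ord_recr !big_ord0 /= !mxE !big_ord_recr !big_ord0 /= !mxE /=.
have -> : widen_ord (leqnSn 1) ord_max = ord0 :> 'I_2 by apply: val_inj.
ring.
Qed.

Lemma vec3E (R : realType) (x : 'cV[R]_3) :
  x = vec3 (x ord0 ord0) (x (inord 1) ord0) (x ord_max ord0).
Proof.
apply/matrixP => i j; rewrite !mxE (ord1 j).
case: i => [[|[|[|i]]] Hi] //=; congr (x _ _); apply: val_inj => //=; by rewrite inordK.
Qed.

Lemma vec2E (R : realType) (x : 'cV[R]_2) :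
  x = vec2 (x ord0 ord0) (x ord_max ord0).
Proof.
apply/matrixP => i j; rewrite !mxE (ord1 j).
case: i => [[|[|i]] Hi] //=; congr (x _ _); apply: val_inj => //=.
Qed.

Lemma psd2_nec (R : realType) (a b c : R) :
  (forall x y : R, 0 <= a * x * x + 2 * b * x * y + c * y * y) ->
  [/\ 0 <= a, 0 <= c & b * b <= a * c].
Proof.
move=> H.
have ha : 0 <= a by have := H 1 0; lra.
have hc : 0 <= c by have := H 0 1; lra.
split => //.
have [c0|cpos] := eqVneq c 0.
  have := H b (- (a + 2)); rewrite c0 => h.
  nra.
have cp : 0 < c by rewrite lt0r cpos.
have := H c (- b) => h.
have e : a * c * c + 2 * b * c * - b + c * - b * - b = c * (a * c - b * b) by ring.
rewrite e in h. rewrite -subr_ge0. by rewrite pmulr_rge0 in h.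
Qed.

Lemma psd2_suf (R : realType) (a b c : R) :
  0 <= a -> 0 <= c -> b * b <= a * c ->
  forall x y : R, 0 <= a * x * x + 2 * b * x * y + c * y * y.
Proof.
move=> ha hc hd x y.
have [a0|apos] := eqVneq a 0.
  have b0 : b = 0 by nra.
  rewrite a0 b0; nra.
have ap : 0 < a by rewrite lt0r apos.
have e : a * (a * x * x + 2 * b * x * y + c * y * y) = (a * x + b * y) ^+ 2 + (a * c - b * b) * y ^+ 2 by ring.
have : 0 <= a * (a * x * x + 2 * b * x * y + c * y * y).
  rewrite e; apply: addr_ge0; first exact: sqr_ge0.
  apply: mulr_ge0; [lra | exact: sqr_ge0].
by rewrite pmulr_rge0.
Qed.

Lemma cub_root (R : realType) (bb r : R) : 0 < bb -> rcubic bb r = 0 ->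
  0 < r /\ r * r <= 1.
Proof.
rewrite /rcubic => hb hf.
have e : (r * bb - (r * r + 1)) ^+ 2 = 1 - r * r + r * (r * bb ^+ 2 - 2 * (r ^+ 2 + 1) * bb + r ^+ 3 + 3 * r) by ring.
rewrite hf mulr0 addr0 in e.
split; last by have := sqr_ge0 (r * bb - (r * r + 1)); lra.
rewrite ltNge; apply/negP => hr.
have : r * bb ^+ 2 - 2 * (r ^+ 2 + 1) * bb + r ^+ 3 + 3 * r < 0.
  have e2 : r * bb ^+ 2 - 2 * (r ^+ 2 + 1) * bb + r ^+ 3 + 3 * r = r * (bb^+2 + r^+2 + 3) - 2 * (r^+2 + 1) * bb by ring.
  rewrite e2.
  have h1 : r * (bb^+2 + r^+2 + 3) <= 0 by apply: mulr_le0_ge0 => //; have := sqr_ge0 bb; have := sqr_ge0 r; lra.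
  have h2 : 0 < 2 * (r^+2 + 1) * bb by apply: mulr_gt0 => //; have := sqr_ge0 r; lra.
  lra.
lra.
Qed.

Lemma cub_mono (R : realType) (bb r rs : R) :
  r * r <= 1 -> rs * rs <= 1 -> rcubic bb rs = 0 -> rcubic bb r <= 0 -> r <= rs.
Proof.
rewrite /rcubic => h1 h2 hf hr.
rewrite leNgt; apply/negP => hlt.
have e : r * bb ^+ 2 - 2 * (r ^+ 2 + 1) * bb + r ^+ 3 + 3 * r -
         (rs * bb ^+ 2 - 2 * (rs ^+ 2 + 1) * bb + rs ^+ 3 + 3 * rs) =
         (r - rs) * ((bb - r - rs) ^+ 2 - r * rs + 3) by ring.
rewrite hf subr0 in e.
have hq : 0 < (bb - r - rs) ^+ 2 - r * rs + 3.
  have := sqr_ge0 (bb - r - rs); have := sqr_ge0 (r - rs); rewrite !expr2; nra.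
have : 0 < (r - rs) * ((bb - r - rs) ^+ 2 - r * rs + 3) by apply: mulr_gt0 => //; lra.
lra.
Qed.

Lemma psd_point (R : realType) (bb rs : R) : 0 < bb -> rcubic bb rs = 0 ->
  [/\ 0 <= 2 * bb - 3 * rs, 0 <= rs - rs ^+ 3 &
    (bb * rs - 2 * rs ^+ 2) * (bb * rs - 2 * rs ^+ 2) <= (2 * bb - 3 * rs) * (rs - rs ^+ 3)].
Proof.
move=> hb hf.
have [rpos r1] := cub_root hb hf.
move: hf; rewrite /rcubic => hf.
have e : (rs * bb - (rs * rs + 1)) ^+ 2 = 1 - rs * rs + rs * (rs * bb ^+ 2 - 2 * (rs ^+ 2 + 1) * bb + rs ^+ 3 + 3 * rs) by ring.
rewrite hf mulr0 addr0 in e.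
split.
- set u := rs * bb - (rs * rs + 1) in e.
  have h2 : 3 * (rs * rs) <= 2 * (rs * bb).
    have hu : rs * rs - 2 <= 2 * u.
      rewrite leNgt; apply/negP => hlt.
      have : (2 - rs * rs) * (2 - rs * rs) < (2 * u) * (2 * u) by nra.
      rewrite expr2 in e. nra.
    rewrite /u in hu; lra.
  have : 0 <= rs * (2 * bb - 3 * rs) by nra.
  by rewrite pmulr_rge0.
- have -> : rs - rs ^+ 3 = rs * (1 - rs * rs) by ring.
  apply: mulr_ge0; lra.
- rewrite -subr_ge0.
  have -> : (2 * bb - 3 * rs) * (rs - rs ^+ 3) - (bb * rs - 2 * rs ^+ 2) * (bb * rs - 2 * rs ^+ 2)
     = - rs * (rs * bb ^+ 2 - 2 * (rs ^+ 2 + 1) * bb + rs ^+ 3 + 3 * rs) by ring.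
  by rewrite hf mulr0.
Qed.

Lemma ge0_eq (R : realType) (x y : R) : 0 <= x -> x = y -> 0 <= y.
Proof. by move=> h <-. Qed.

Lemma sq0 (R : realType) (x : R) : - x * - x <= 0 -> x = 0.
Proof.
move=> h; apply/eqP; rewrite -sqrf_eq0 eq_le sqr_ge0 andbT.
by rewrite -sqrrN expr2.
Qed.

Theorem theorem6 (R : realType) (m bb rs : R) :
  0 < m -> 0 < bb -> rcubic bb rs = 0 ->
  (forall r : R, rcubic bb r = 0 -> r = rs) /\
  feasible m bb (Num.sqrt m * rs) ((m / 2) *: sym2 1 rs (rs ^+ 2)) /\
  (forall (l : R) (P : 'M[R]_2), feasible m bb l P -> l <= Num.sqrt m * rs).
Proof.
move=> hm hb hf.
have [rpos r1] := cub_root hb hf.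
have hs : 0 < Num.sqrt m by rewrite sqrtr_gt0.
have hsm : Num.sqrt m ^+ 2 = m by rewrite sqr_sqrtr // ltW.
split.
  move=> r hr; have [rp' r1'] := cub_root hb hr.
  apply/eqP; rewrite eq_le; apply/andP; split.
    by apply: (cub_mono r1' r1 hf); rewrite hr.
  by apply: (cub_mono r1 r1' hr); rewrite hf.
split.
  split.
    split.
      apply/matrixP => i j; rewrite !mxE.
      by case: i => [[|[|[|i]]] Hi]; case: j => [[|[|[|j]]] Hj].
    move=> x; rewrite (vec3E x) qfT /=.
    set a := x ord0 ord0; set b := x (inord 1) ord0; set c := x ord_max ord0.
    rewrite !mxE /=.
    move: hs hsm; set s := Num.sqrt m => hs hsm.
    clearbody s; subst m.
    have sn0 : s != 0 by rewrite gt_eqF.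
    have e : forall a b c : R, - (a * a * ((s * rs - 2 * bb * s) * (s ^+ 2 / 2 * 1) + 2 * s * (s ^+ 2 / 2 * rs)) +
      2 * a * b * (- bb * s * (s ^+ 2 / 2 * rs) + s * (s ^+ 2 / 2 * rs ^+ 2) + s * rs * (s ^+ 2 / 2 * rs)) +
      2 * a * c * (- (s ^+ 2 / 2 * 1) / s + s / 2) +
      b * b * (s * rs * (s ^+ 2 / 2 * rs ^+ 2) - s ^+ 2 / 2 * (s * rs)) +
      2 * b * c * (- (s ^+ 2 / 2 * rs) / s + s * rs / 2))
      = (s ^+ 3 / 2) * ((2 * bb - 3 * rs) * a * a + 2 * (bb * rs - 2 * rs ^+ 2) * a * b + (rs - rs ^+ 3) * b * b).
      by move=> a0 b0 c0; field.
    rewrite e; apply: mulr_ge0; first by apply: divr_ge0 => //; apply: exprn_ge0; lra.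
    have [hA hC hD] := psd_point hb hf.
    exact: psd2_suf.

  split.
    apply/matrixP => i j; rewrite !mxE.
    by case: i => [[|[|i]] Hi]; case: j => [[|[|j]] Hj].
  move=> x; rewrite (vec2E x) qfP !mxE /=.
  set a := x ord0 ord0; set b := x ord_max ord0.
  have -> : a * a * (m / 2 * 1) + a * b * (m / 2 * rs + m / 2 * rs) + b * b * (m / 2 * rs ^+ 2)
     = m / 2 * (a + rs * b) ^+ 2 by ring.
  apply: mulr_ge0; [apply: divr_ge0; lra | exact: sqr_ge0].
move=> l P [[_ hTq] [hPt hPq]].
have hsym : P ord_max ord0 = P ord0 ord_max.
  by have := congr1 (fun M : 'M[R]_2 => M ord0 ord_max) hPt; rewrite mxE.
have qP : forall x y, 0 <= P ord0 ord0 * x * x + 2 * P ord0 ord_max * x * y + P ord_max ord_max * y * y.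
  move=> x y; have := hPq (vec2 x y); rewrite qfP hsym => h; apply: (ge0_eq h); ring.
have [hp11 hp22 hPd] := psd2_nec qP.
have qT : forall a b c : R, 0 <= - (a * a * ((l - 2 * bb * Num.sqrt m) * P ord0 ord0 + 2 * Num.sqrt m * P ord0 ord_max)
     + 2 * a * b * (- bb * Num.sqrt m * P ord0 ord_max + Num.sqrt m * P ord_max ord_max + l * P ord0 ord_max)
     + 2 * a * c * (- P ord0 ord0 / Num.sqrt m + Num.sqrt m / 2)
     + b * b * (l * P ord_max ord_max - m / 2 * l)
     + 2 * b * c * (- P ord0 ord_max / Num.sqrt m + l / 2)).
  by move=> a b c; have := hTq (vec3 a b c); rewrite qfT.
clear hTq hPq hPt hsym qP.
move: qT hp11 hp22 hPd.
move: (P ord0 ord0) (P ord0 ord_max) (P ord_max ord_max) => p11 p12 p22 qT hp11 hp22 hPd.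
move: hs hsm qT; move: (Num.sqrt m : R) => s hs hsm qT.
subst m.
have sn0 : s != 0 by rewrite gt_eqF.
have h13 : forall x y : R, 0 <= (- ((l - 2 * bb * s) * p11 + 2 * s * p12)) * x * x
    + 2 * (- (- p11 / s + s / 2)) * x * y + 0 * y * y.
  move=> x y; apply: (ge0_eq (qT x 0 y)); ring.
have h23 : forall x y : R, 0 <= (- (l * p22 - s ^+ 2 / 2 * l)) * x * x
    + 2 * (- (- p12 / s + l / 2)) * x * y + 0 * y * y.
  move=> x y; apply: (ge0_eq (qT 0 x y)); ring.
have h12 : forall x y : R, 0 <= (- ((l - 2 * bb * s) * p11 + 2 * s * p12)) * x * x
    + 2 * (- (- bb * s * p12 + s * p22 + l * p12)) * x * y + (- (l * p22 - s ^+ 2 / 2 * l)) * y * y.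
  move=> x y; apply: (ge0_eq (qT x y 0)); ring.
have [_ _ d13] := psd2_nec h13.
have [_ _ d23] := psd2_nec h23.
have [_ g22 d12] := psd2_nec h12.
clear h13 h23 h12 qT.
rewrite mulr0 in d13. rewrite mulr0 in d23.
have t13 := sq0 d13. have t23 := sq0 d23.
have e11 : p11 = s ^+ 2 / 2.
  have -> : p11 = s * (s / 2 + (- (- p11 / s + s / 2))) by field.
  by rewrite t13; field.
have e12 : p12 = s ^+ 2 / 2 * (l / s).
  have -> : p12 = s * (l / 2 + (- (- p12 / s + l / 2))) by field.
  by rewrite t23; field.
have el : l = s * (l / s) by field.
move: e12 el; move: (l / s) => r e12 el.
have eq : p22 = s ^+ 2 / 2 * (r ^+ 2 + (2 * p22 / s ^+ 2 - r ^+ 2)) by field.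
move: eq; move: (2 * p22 / s ^+ 2 - r ^+ 2) => q eq.
subst p11 p12 p22 l.
clear t13 t23 d13 d23.
have K2 : 0 < (s ^+ 2 / 2) ^+ 2 by apply: exprn_gt0; apply: divr_gt0 => //; lra.
have K3 : 0 < s ^+ 3 / 2 by apply: divr_gt0; [exact: exprn_gt0 | lra].
have K6 : 0 < (s ^+ 3 / 2) ^+ 2 by exact: exprn_gt0.
have hq : 0 <= q.
  have : 0 <= (s ^+ 2 / 2) ^+ 2 * q.
    by move: hPd; rewrite -subr_ge0 => h; apply: (ge0_eq h); ring.
  by rewrite pmulr_rge0.
have h22 : 0 <= r * (1 - r ^+ 2 - q).
  have : 0 <= (s ^+ 3 / 2) * (r * (1 - r ^+ 2 - q)) by apply: (ge0_eq g22); ring.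
  by rewrite pmulr_rge0.
have hdet : 0 <= - r * rcubic bb r - q * r ^+ 2 - q ^+ 2.
  have : 0 <= (s ^+ 3 / 2) ^+ 2 * (- r * rcubic bb r - q * r ^+ 2 - q ^+ 2).
    by move: d12; rewrite -subr_ge0 => h; apply: (ge0_eq h); rewrite /rcubic; ring.
  by rewrite pmulr_rge0.
rewrite ler_pM2l //.
have [rle|rgt] := lerP r 0; first by lra.
have hr1 : r * r <= 1.
  have : 0 <= 1 - r ^+ 2 - q by move: h22; rewrite pmulr_rge0.
  rewrite expr2; lra.
apply: (cub_mono hr1 r1 hf).
have : 0 <= r * (- rcubic bb r).
  have -> : r * (- rcubic bb r) = - r * rcubic bb r by ring.
  have := sqr_ge0 q; have : 0 <= q * r ^+ 2 by apply: mulr_ge0 => //; exact: sqr_ge0.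
  lra.
rewrite pmulr_rge0 //; lra.
Qed.
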